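(* Let $\mathbb{Z}$ be a finite-dimensional Euclidean space, $L>0$, $G:\mathbb{Z}\to\mathbb{Z}$ $\frac1L$-co-coercive, $\beta_k\in(0,1)$, $\eta_k=(1-\beta_k)/L$, and let $z^0\in\mathbb{Z}$, $\tilde z^k\in\mathbb{Z}$ arbitrary and $z^{k+1}=\beta_kz^0+(1-\beta_k)z^k-\eta_k\tilde z^k$ for $k\ge0$. Then for $k\ge0$, \[\frac1{2L}\|G(z^{k+1})\|^2-\frac{\beta_k}{1-\beta_k}\langle G(z^{k+1}),z^0-z^{k+1}\rangle\le\frac{1-2\beta_k}{2L}\|G(z^k)\|^2-\beta_k\langle G(z^k),z^0-z^k\rangle+\frac{\beta_k}L\langle G(z^k),G(z^k)-\tilde z^k\rangle+\frac1{2L}\|G(z^k)-\tilde z^k\|^2.\] In particular, if $\beta_k=1/(k+2)$, then for $k\ge0$, \[\mathcal{L}_{k+1}\le\mathcal{L}_k+\frac1{12L}\|G(z^k)\|^2+\frac{4(k+1)^2}{L}\|G(z^k)-\tilde z^k\|^2,\] where $\mathcal{L}_k:=\frac{k(k+1)}{2L}\|G(z^k)\|^2-(k+1)\langle G(z^k),z^0-z^k\rangle$.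
   Context: $G$ is $\frac1L$-co-coercive if $\langle G(x_1)-G(x_2),x_1-x_2\rangle\ge\frac1L\|G(x_1)-G(x_2)\|^2$ for all $x_1,x_2$. *)

(* Defs.v *)
From mathcomp Require Import all_boot all_order all_algebra.
From mathcomp Require Import reals.
Set Implicit Arguments. Unset Strict Implicit. Unset Printing Implicit Defensive.
Import Order.TTheory GRing.Theory Num.Theory.
Local Open Scope ring_scope.

(* The finite-dimensional Euclidean space Z is modelled as R^n = 'rV[R]_n
   with the standard inner product. *)
Definition dotp (R : realType) (n : nat) (u v : 'rV[R]_n) : R :=
  \sum_(i < n) u ord0 i * v ord0 i.

Definition sqnorm (R : realType) (n : nat) (u : 'rV[R]_n) : R := dotp u u.

Definition cocoercive (R : realType) (n : nat) (L : R)
  (G : 'rV[R]_n -> 'rV[R]_n) : Prop :=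
  forall x1 x2 : 'rV[R]_n,
    dotp (G x1 - G x2) (x1 - x2) >= L^-1 * sqnorm (G x1 - G x2).

Definition lyap (R : realType) (n : nat) (L : R)
  (G : 'rV[R]_n -> 'rV[R]_n) (z : nat -> 'rV[R]_n) (k : nat) : R :=
  (k%:R * (k%:R + 1)) / (2 * L) * sqnorm (G (z k))
  - (k%:R + 1) * dotp (G (z k)) (z 0%N - z k).

(* Main.v *)
Require Import Defs.
From mathcomp Require Import all_boot all_order all_algebra.
From mathcomp Require Import reals.
From mathcomp Require Import ring lra.
Import Order.TTheory GRing.Theory Num.Theory.
Local Open Scope ring_scope.
Section S.
Variables (R : realType) (n : nat).
Implicit Types u v w : 'rV[R]_n.
Lemma dotpC u v : dotp u v = dotp v u.
Proof. by apply: eq_bigr => i _; rewrite mulrC. Qed.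
Lemma dotpDr u v w : dotp u (v + w) = dotp u v + dotp u w.
Proof. rewrite /dotp -big_split; apply: eq_bigr => i _; by rewrite mxE mulrDr. Qed.
Lemma dotpZr u v (a : R) : dotp u (a *: v) = a * dotp u v.
Proof. rewrite /dotp mulr_sumr; apply: eq_bigr => i _; rewrite mxE; ring. Qed.
Lemma dotpNr u v : dotp u (- v) = - dotp u v.
Proof. by rewrite -scaleN1r dotpZr mulN1r. Qed.
Lemma dotpBr u v w : dotp u (v - w) = dotp u v - dotp u w.
Proof. by rewrite dotpDr dotpNr. Qed.
Lemma dotpDl u v w : dotp (v + w) u = dotp v u + dotp w u.
Proof. by rewrite dotpC dotpDr !(dotpC u). Qed.
Lemma dotpZl u v (a : R) : dotp (a *: v) u = a * dotp v u.
Proof. by rewrite dotpC dotpZr dotpC. Qed.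
Lemma dotpNl u v : dotp (- v) u = - dotp v u.
Proof. by rewrite dotpC dotpNr dotpC. Qed.
Lemma dotpBl u v w : dotp (v - w) u = dotp v u - dotp w u.
Proof. by rewrite dotpDl dotpNl. Qed.
Lemma sqnorm_ge0 u : 0 <= sqnorm u.
Proof. by apply: sumr_ge0 => i _; rewrite -expr2 sqr_ge0. Qed.
End S.
Lemma comb (R : realType) (c P Q A B C : R) :
  Q - P = (B - A) + c * C -> 0 <= c -> A <= B -> 0 <= C -> P <= Q.
Proof.
move=> e hc hab hC; rewrite -subr_ge0 e; apply: addr_ge0.
  by rewrite subr_ge0.
exact: mulr_ge0.
Qed.

Lemma comb3 (R : realType) (c1 c2 c3 P Q A B Y Z : R) :
  Q - P = c1 * (B - A) + c2 * Y + c3 * Z -> 0 <= c1 -> 0 <= c2 -> 0 <= c3 ->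
  A <= B -> 0 <= Y -> 0 <= Z -> P <= Q.
Proof.
move=> e h1 h2 h3 hab hY hZ; rewrite -subr_ge0 e.
by rewrite !addr_ge0 // mulr_ge0 // subr_ge0.
Qed.

Lemma part1 (R : realType) (n : nat) (L : R) (G : 'rV[R]_n -> 'rV[R]_n)
  (b : R) (a x t y : 'rV[R]_n) :
  0 < L -> cocoercive L G -> 0 < b < 1 ->
  y = b *: a + (1 - b) *: x - ((1 - b) / L) *: t ->
     (2 * L)^-1 * sqnorm (G y)
       - b / (1 - b) * dotp (G y) (a - y)
     <= (1 - 2 * b) / (2 * L) * sqnorm (G x)
        - b * dotp (G x) (a - x)
        + b / L * dotp (G x) (G x - t)
        + (2 * L)^-1* sqnorm (G x - t).
Proof.
move=> L0 Hc /andP[b0 b1] Hy.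
have coco := Hc y x.
have sq := @sqnorm_ge0 R n (G y - 2 *: G x + t).
have c0 : 0 <= (2 * L)^-1 by rewrite invr_ge0 mulr_ge0 // ltW.
apply: (@comb R _ _ _ _ _ _ _ c0 coco sq).
move: (G y) (G x) => g1 g0.
rewrite Hy /sqnorm.
rewrite !(dotpDl, dotpDr, dotpBl, dotpBr, dotpZl, dotpZr, dotpNl, dotpNr).
rewrite (@dotpC _ _ g0 g1) (@dotpC _ _ t g1) (@dotpC _ _ t g0).
have Ln : L != 0 by rewrite gt_eqF.
have bn : 1 - b != 0 by rewrite subr_eq0 eq_sym lt_eqF.
field; rewrite Ln bn //=.
Qed.

Theorem lemma15 (R : realType) (n : nat) (L : R) (G : 'rV[R]_n -> 'rV[R]_n)
  (beta : nat -> R) (z zt : nat -> 'rV[R]_n) :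
  0 < L ->
  cocoercive L G ->
  (forall k, 0 < beta k < 1) ->
  (forall k, z k.+1 = beta k *: z 0%N + (1 - beta k) *: z k
                      - ((1 - beta k) / L) *: zt k) ->
  (forall k : nat,
     (2 * L)^-1 * sqnorm (G (z k.+1))
       - beta k / (1 - beta k) * dotp (G (z k.+1)) (z 0%N - z k.+1)
     <= (1 - 2 * beta k) / (2 * L) * sqnorm (G (z k))
        - beta k * dotp (G (z k)) (z 0%N - z k)
        + beta k / L * dotp (G (z k)) (G (z k) - zt k)
        + (2 * L)^-1 * sqnorm (G (z k) - zt k))
  /\
  ((forall k, beta k = (k%:R + 2)^-1) ->
   forall k : nat,
     lyap L G z k.+1
     <= lyap L G z k + (12 * L)^-1 * sqnorm (G (z k))
        + 4 * (k%:R + 1) ^+ 2 / L * sqnorm (G (z k) - zt k)).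
Proof.
move=> L0 Hc Hb Hz.
have P1 : forall k : nat,
     (2 * L)^-1 * sqnorm (G (z k.+1))
       - beta k / (1 - beta k) * dotp (G (z k.+1)) (z 0%N - z k.+1)
     <= (1 - 2 * beta k) / (2 * L) * sqnorm (G (z k))
        - beta k * dotp (G (z k)) (z 0%N - z k)
        + beta k / L * dotp (G (z k)) (G (z k) - zt k)
        + (2 * L)^-1 * sqnorm (G (z k) - zt k).
  by move=> k; apply: part1 => //; apply: Hz.
split=> // Hbk k.
have h := P1 k; rewrite Hbk in h.
have y := @sqnorm_ge0 R n (G (z k) - (6 * (k%:R + 1)) *: (G (z k) - zt k)).
have Z := @sqnorm_ge0 R n (G (z k) - zt k).
rewrite /lyap -(natr1 k).
set K := k%:R in h y Z *.
have K0 : 0 <= K by rewrite ler0n.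
set g1 := G (z k.+1) in h y Z *.
set g0 := G (z k) in h y Z *.
set a := z 0%N in h y Z *.
set x := z k in h y Z *.
set w := z k.+1 in h y Z *.
set t := zt k in h y Z *.
have Ln : L != 0 by rewrite gt_eqF.
have K1 : K + 1 != 0 by rewrite gt_eqF // ltr_pwDr.
have K2 : K + 2 != 0 by rewrite gt_eqF // ltr_pwDr.
have c1 : 0 <= (K + 1) * (K + 2) by rewrite mulr_ge0 // addr_ge0.
have c2 : 0 <= (12 * L)^-1 by rewrite invr_ge0 mulr_ge0 // ltW.
have c3 : 0 <= K * (K + 1) / (2 * L).
  by rewrite mulr_ge0 ?mulr_ge0 ?addr_ge0 // invr_ge0 mulr_ge0 // ltW.
apply: (@comb3 R _ _ _ _ _ _ _ _ _ _ c1 c2 c3 h y Z).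
rewrite /sqnorm.
rewrite !(dotpDl, dotpDr, dotpBl, dotpBr, dotpZl, dotpZr, dotpNl, dotpNr).
rewrite (@dotpC _ _ t g0).
have K2' : 1 - (K + 2)^-1 != 0.
  have -> : 1 - (K + 2)^-1 = (K + 1) / (K + 2) by field.
  by rewrite mulf_neq0 // invr_neq0.
have e3 : k%:R + 2 - 1 = k%:R + 1 :> R by ring.
field; by rewrite Ln K2 e3 K1.
Qed.
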